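(* Let $\vec{\mathcal G}=([n],E)$ be a directed graph with $m=|E|$ edges in which every vertex has at least one outgoing edge and which has a single strongly connected component. Let the weights $(r_{ij})$ be independent absolutely continuous random variables with densities $f_{ij}$ satisfying $f_{ij}(y)\le\phi$ for all $(i,j),y$, for some $\phi>0$. Let $\delta=1/(3n^2m\phi)$. Then $$\mathbb P\bigl(\exists \text{ a cycle } C:\ B_\infty(r,\delta)\subseteq\mathcal P^{C}\bigr)\ge 1-\frac1n,$$ where $B_\infty(r,\delta)=\{\tilde r\in\mathbb R^m:\|r-\tilde r\|_\infty\le\delta\}$.
   Context: The mean weight of a directed cycle is the sum of its edge weights divided by its number of edges. For a directed cycle $C$, $\mathcal P^{C}$ is the set of $r\in\mathbb R^m$ such that $C$ is the unique cycle of minimum mean weight in $\vec{\mathcal G}$ with weights $r$. *)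

(* Defs.v *)
From HB Require Import structures.
From mathcomp Require Import all_boot all_order all_algebra.
From mathcomp Require Import all_classical all_reals all_analysis.

Set Implicit Arguments.
Unset Strict Implicit.
Unset Printing Implicit Defensive.

Import Order.TTheory GRing.Theory Num.Theory.
Local Open Scope ring_scope.

(* Directed graph on vertex set 'I_n given by its edge set E.  Edge weights
   are functions 'I_n * 'I_n -> R (only the values on E matter). *)

(* A one-vertex sequence gives a self-loop. *)
Definition is_dcycle (n : nat) (E : {set 'I_n * 'I_n}) (C : {set 'I_n * 'I_n}) :=
  exists s : seq 'I_n,
    [/\ s != [::], uniq s, C = [set (x, next s x) | x in s] & C \subset E].

Definition mean_weight (R : realType) (n : nat) (w : 'I_n * 'I_n -> R)
  (C : {set 'I_n * 'I_n}) : R :=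
  (\sum_(e in C) w e) / (#|C|%:R).

Local Open Scope classical_set_scope.

Definition PC (R : realType) (n : nat) (E : {set 'I_n * 'I_n})
  (C : {set 'I_n * 'I_n}) : set ('I_n * 'I_n -> R) :=
  [set w | is_dcycle E C /\
     forall C', is_dcycle E C' -> C' != C -> mean_weight w C < mean_weight w C'].

Definition Binf (R : realType) (n : nat) (E : {set 'I_n * 'I_n})
  (r : 'I_n * 'I_n -> R) (delta : R) : set ('I_n * 'I_n -> R) :=
  [set w | forall e, e \in E -> `|r e - w e| <= delta].

Definition strongly_connected (n : nat) (E : {set 'I_n * 'I_n}) :=
  forall i j : 'I_n, connect (fun x y => (x, y) \in E) i j.

Definition out_nonempty (n : nat) (E : {set 'I_n * 'I_n}) :=
  forall i : 'I_n, exists j : 'I_n, (i, j) \in E.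

Definition mutually_independent (R : realType) (d : measure_display)
  (T : measurableType d) (P : probability T R) (I : finType) (S : {set I})
  (X : I -> T -> R) :=
  forall (J : {set I}) (A : I -> set R),
    J \subset S -> (forall i, measurable (A i)) ->
    P [set t | forall i, i \in J -> A i (X i t)] =
    (\prod_(i in J) P (X i @^-1` A i))%E.

Definition has_density (R : realType) (d : measure_display)
  (T : measurableType d) (P : probability T R) (X : T -> R) (f : R -> R) :=
  measurable_fun setT X /\ measurable_fun setT f /\ (forall y, 0 <= f y) /\
  forall A : set R, measurable A ->
    P (X @^-1` A) = (\int[@lebesgue_measure R]_(y in A) (f y)%:E)%E.

(* Main.v *)
Require Import Defs.
From HB Require Import structures.
From mathcomp Require Import all_boot all_order all_algebra.
From mathcomp Require Import all_classical all_reals all_analysis.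
From mathcomp Require Import ring lra measurable_realfun.
From Stdlib Require Import Classical.
Import Order.TTheory GRing.Theory Num.Theory.
Local Open Scope ring_scope.
Local Open Scope classical_set_scope.

Lemma path_closed (T : eqType) (g : T -> T) (Q : T -> Prop) x q :
  path (frel g) x q -> Q x -> (forall y, Q y -> Q (g y)) -> forall y, y \in q -> Q y.
Proof.
elim: q x => [|z q IH] x //= /andP[/eqP gx pq] Qx HQ y.
rewrite inE => /orP[/eqP->|yq]; first by rewrite -gx; apply: HQ.
apply: (IH z) => //; rewrite -gx; exact: HQ.
Qed.

Lemma next_closed (T : eqType) (s : seq T) (Q : T -> Prop) x :
  uniq s -> x \in s -> Q x -> (forall y, y \in s -> Q y -> Q (next s y)) ->
  forall y, y \in s -> Q y.
Proof.
move=> us xs Qx HQ y ys.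
have [i q rq] := rot_to xs.
have fc := cycle_next us.
have : fcycle (next s) (rot i s) by rewrite rot_cycle.
rewrite rq /= rcons_path => /andP[pq _].
have ys' : y \in x :: q by rewrite -rq mem_rot.
move: ys'; rewrite inE => /orP[/eqP->//|yq].
pose Q' z := z \in s /\ Q z.
have : Q' y; last by case.
apply: (@path_closed _ _ Q' _ _ pq _ _ y yq); first by split.
move=> z [zs Qz]; split; [by rewrite mem_next | exact: HQ].
Qed.

Section Comb.
Variables (n : nat) (E : {set 'I_n * 'I_n}).

Lemma dcycle_sub C : is_dcycle E C -> C \subset E.
Proof. by case=> s [_ _ _ ->]. Qed.

Lemma dcycle_card C : is_dcycle E C -> (0 < #|C|)%N /\ (#|C| <= n)%N.
Proof.
case=> s [s0 us -> _]; split.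
  case: s s0 us => // x s _ _; apply/card_gt0P; exists (x, next (x :: s) x).
  by apply/imsetP; exists x => //; rewrite inE eqxx.
apply: (leq_trans (leq_imset_card _ _)).
by rewrite (leq_trans (max_card _)) // card_ord.
Qed.

Lemma dcycle_subset_eq C1 C2 : is_dcycle E C1 -> is_dcycle E C2 ->
  C1 \subset C2 -> C1 = C2.
Proof.
case=> s1 [s10 us1 -> _]; case=> s2 [s20 us2 -> _] /fintype.subsetP sub.
have H x : x \in s1 -> x \in s2 /\ next s2 x = next s1 x.
  move=> xs1.
  have /sub /imsetP [y ys2 [-> ->]] : (x, next s1 x) \in [set (x, next s1 x) | x in s1]%SET.
    by apply/imsetP; exists x.
  by [].
case: s1 s10 us1 H sub => // x0 s1' _ us1 H sub.
have x0s1 : x0 \in x0 :: s1' by rewrite inE eqxx.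
have [x0s2 _] := H _ x0s1.
have all2 : forall y, y \in s2 -> y \in x0 :: s1'.
  apply: (@next_closed _ s2 (fun y => y \in x0 :: s1') x0 us2 x0s2 x0s1) => y ys2 ys1.
  have [_ ->] := H _ ys1; by rewrite mem_next.
apply/eqP; rewrite finset.eqEsubset; apply/andP; split; apply/fintype.subsetP => //.
move=> p /imsetP [y ys2 ->]; apply/imsetP; exists y; first exact: all2.
by have [_ ->] := H _ (all2 _ ys2).
Qed.

Lemma dcycle_exists : (0 < n)%N -> out_nonempty E -> strongly_connected E ->
  exists C, is_dcycle E C.
Proof.
move=> n0 hout hsc.
pose x0 : 'I_n := Ordinal n0.
have [j hj] := hout x0.
have /connectP [p pp lp] := hsc j x0.
case: (shortenP pp) lp => p' pp' up' _ lp'.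
exists [set (x, next (j :: p') x) | x in j :: p']%SET; exists (j :: p'); split => //.
apply/fintype.subsetP => e /imsetP [x xs ->].
have cyc : cycle (fun x y => (x, y) \in E) (j :: p').
  by rewrite /= rcons_path pp' /= -lp'.
exact: (next_cycle cyc xs).
Qed.

End Comb.
Arguments dcycle_sub {n E C}.
Arguments dcycle_card {n E C}.
Arguments dcycle_subset_eq {n E C1 C2}.
Section Mw.
Variables (R : realType) (n : nat).
Implicit Types (v w : 'I_n * 'I_n -> R) (C : {set 'I_n * 'I_n}).

Lemma mw_diff v v' C : mean_weight v' C - mean_weight v C =
  (\sum_(e in C) (v' e - v e)) / #|C|%:R.
Proof. by rewrite /mean_weight -mulrBl sumrB. Qed.

Lemma mw_le v v' C h : (0 < #|C|)%N -> (forall e, e \in C -> v' e <= v e + h) ->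
  mean_weight v' C <= mean_weight v C + h.
Proof.
move=> C0 H; rewrite -lerBlDl mw_diff.
have k0 : 0 < #|C|%:R :> R by rewrite ltr0n.
rewrite ler_pdivrMr //.
have -> : h * #|C|%:R = \sum_(e in C) h by rewrite sumr_const mulr_natr.
apply: ler_sum => e eC; have := H e eC; lra.
Qed.

Lemma mw_ge v v' C e0 X h : (0 < #|C|)%N -> (#|C| <= n)%N -> e0 \in C ->
  0 <= X -> 0 <= h -> v e0 + X <= v' e0 ->
  (forall e, e \in C -> e != e0 -> v e - h <= v' e) ->
  mean_weight v C + X / n%:R - h <= mean_weight v' C.
Proof.
move=> C0 Cn e0C X0 h0 He0 H.
have k0 : 0 < #|C|%:R :> R by rewrite ltr0n.
have kn : #|C|%:R <= n%:R :> R by rewrite ler_nat.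
suff : X / n%:R - h <= mean_weight v' C - mean_weight v C by lra.
rewrite mw_diff.
have S : X - h * #|C|%:R <= \sum_(e in C) (v' e - v e).
  rewrite (bigD1 e0) //=.
  have -> : h * #|C|%:R = h + \sum_(e in C | e != e0) h.
    rewrite sumr_const; have := cardsD1 e0 C; rewrite e0C => ->.
    rewrite /= natrD mulrDr mulr1 mulr_natr; congr (_ + _ *+ _).
    by apply: eq_card => i; rewrite !inE andbC.
  have : \sum_(e in C | e != e0) (- h) <= \sum_(e in C | e != e0) (v' e - v e).
    by apply: ler_sum => e /andP[eC ne]; have := H e eC ne; lra.
  rewrite sumrN; lra.
apply: (@le_trans _ _ ((X - h * #|C|%:R) / #|C|%:R)); last first.
  by rewrite ler_pM2r ?invr_gt0.
rewrite mulrBl -mulrA mulfV ?gt_eqF // mulr1 lerD2r.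
apply: ler_wpM2l => //; rewrite lef_pV2 ?posrE //; lra.
Qed.
End Mw.
Arguments mw_le {R n v v' C h}.
Arguments mw_ge {R n v v' C e0 X h}.

Lemma exists_min (R : realType) (T : finType) (Pr : T -> Prop) (F : T -> R) :
  (exists x, Pr x) -> exists x, Pr x /\ forall y, Pr y -> F x <= F y.
Proof.
move=> [x0 Px0].
suff : forall s : seq T, (exists x, x \in s /\ Pr x) ->
  exists x, Pr x /\ forall y, y \in s -> Pr y -> F x <= F y.
  move=> /(_ (enum T)) [|x [Px H]]; first by exists x0; rewrite mem_enum.
  by exists x; split => // y; apply: H; rewrite mem_enum.
elim=> [|a s IH] [x [xs Px]] //.
case: (classic (exists x, x \in s /\ Pr x)) => [ex|nex].
  have [y [Py Hy]] := IH ex.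
  case: (classic (Pr a)) => Pa.
    case: (leP (F a) (F y)) => Fay.
      exists a; split => // z; rewrite inE => /orP[/eqP->//|zs] Pz.
      exact: le_trans Fay (Hy z zs Pz).
    exists y; split => // z; rewrite inE => /orP[/eqP->//|zs] Pz; last exact: Hy.
    exact: ltW.
  exists y; split => // z; rewrite inE => /orP[/eqP->//|zs] Pz //; exact: Hy.
have xa : x = a.
  move: xs; rewrite inE => /orP[/eqP//|xs]; by exfalso; apply: nex; exists x.
subst x; exists a; split => // z; rewrite inE => /orP[/eqP->//|zs] Pz.
by exfalso; apply: nex; exists z.
Qed.

Section Det.
Variables (R : realType) (n : nat) (E : {set 'I_n * 'I_n}) (delta : R).

Definition bad e (v : 'I_n * 'I_n -> R) := exists C1 C2,
  [/\ is_dcycle E C1, is_dcycle E C2, e \in C1, e \notin C2 &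
   mean_weight v C2 <= mean_weight v C1 + 2 * delta /\
   forall C, is_dcycle E C -> mean_weight v C1 <= mean_weight v C].

Lemma notgood_bad v : (exists C, is_dcycle E C) ->
  ~ (exists C, is_dcycle E C /\ Binf E v delta `<=` PC E C) ->
  exists e, e \in E /\ bad e v.
Proof.
move=> exC ng.
have [C1 [dC1 minC1]] := @exists_min R _ _ (fun C => mean_weight v C) exC.
have : ~ (Binf E v delta `<=` PC E C1) by move=> H; apply: ng; exists C1; split.
move=> /not_all_ex_not [w Hw]; have [Bw nP] := imply_to_and _ _ Hw.
have : ~ (forall C', is_dcycle E C' -> C' != C1 ->
     mean_weight w C1 < mean_weight w C') by move=> H; apply: nP; split.
move=> /not_all_ex_not [C' HC]; have [dC' HC2] := imply_to_and _ _ HC; have [ne nlt] := imply_to_and _ _ HC2.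
have lew : mean_weight w C' <= mean_weight w C1 by rewrite leNgt; apply/negP.
have sub1 := dcycle_sub dC1; have sub' := dcycle_sub dC'.
have [c10 _] := dcycle_card dC1; have [c'0 _] := dcycle_card dC'.
have h1 : mean_weight v C' <= mean_weight w C' + delta.
  apply: mw_le => // e eC; have := Bw e (fintype.subsetP sub' e eC).
  by rewrite ler_norml => /andP[]; lra.
have h2 : mean_weight w C1 <= mean_weight v C1 + delta.
  apply: mw_le => // e eC; have := Bw e (fintype.subsetP sub1 e eC).
  by rewrite ler_norml => /andP[]; lra.
have : ~~ (C1 \subset C').
  apply/negP => /(dcycle_subset_eq dC1 dC') eq; by rewrite eq eqxx in ne.
case/fintype.subsetPn => e eC1 eC'.
exists e; split; first exact: fintype.subsetP sub1 e eC1.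
exists C1, C'; split => //; split => //; lra.
Qed.

Lemma bad_diam e v v' h : 0 <= h -> bad e v -> bad e v' ->
  (forall i, i \in E -> i != e -> `|v i - v' i| <= h) ->
  v' e - v e <= n%:R * (2 * delta + 2 * h).
Proof.
move=> h0 [C1 [C2 [d1 d2 e1 e2 [g m]]]] [C1' [C2' [d1' d2' e1' e2' [g' m']]]] H.
have [c0 cn] := dcycle_card d1'.
have n0 : 0 < n%:R :> R by rewrite ltr0n; exact: leq_trans c0 cn.
have del0 : 0 <= delta.
  have := m C2 d2; lra.
case: (leP 0 (v' e - v e)) => X0; last first.
  apply: le_trans (ltW X0) _; apply: mulr_ge0; [exact: ltW | lra].
set X := v' e - v e.
have A : mean_weight v C1' + X / n%:R - h <= mean_weight v' C1'.
  apply: (mw_ge (e0 := e)) => //; first by rewrite /X; lra.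
  move=> i iC ne; have := H i (fintype.subsetP (dcycle_sub d1') i iC) ne.
  by rewrite ler_norml => /andP[]; lra.
have B := m C1' d1'.
have [c20 _] := dcycle_card d2.
have D : mean_weight v' C2 <= mean_weight v C2 + h.
  apply: mw_le => // i iC.
  have ne : i != e by apply/eqP => ie; rewrite -ie iC in e2.
  have := H i (fintype.subsetP (dcycle_sub d2) i iC) ne.
  by rewrite ler_norml => /andP[]; lra.
have F := m' C2 d2.
have : X / n%:R <= 2 * delta + 2 * h by lra.
by rewrite ler_pdivrMr // mulrC.
Qed.


Lemma floor_close (h a b : R) : 0 < h -> Num.floor (a / h) = Num.floor (b / h) ->
  `|a - b| <= h.
Proof.
move=> h0 fe.
have := floor_itv (a / h); have := floor_itv (b / h); rewrite fe intrD.
set k := (Num.floor (b / h))%:~R => /andP[hb1 hb2] /andP[ha1 ha2].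
have ea : a = (a / h) * h by rewrite mulfVK ?gt_eqF.
have eb : b = (b / h) * h by rewrite mulfVK ?gt_eqF.
rewrite ea eb -mulrBl normrM (gtr0_norm h0) -[X in _ <= X]mul1r.
apply: ler_wpM2r; first exact: ltW.
rewrite ler_norml; apply/andP; split; lra.
Qed.

Definition Sset e h (g : {ffun 'I_n * 'I_n -> int}) : set R :=
  [set x | exists v, bad e v /\ v e = x /\
     forall i, i \in E :\ e -> Num.floor (v i / h) = g i].

Lemma S_bounds e v h g : 0 < h -> bad e v ->
  g = [ffun i => if i \in E :\ e then Num.floor (v i / h) else 0] ->
  inf (Sset e h g) <= v e <= inf (Sset e h g) + n%:R * (2 * delta + 2 * h).
Proof.
move=> h0 bv ->; set g' := [ffun i => _].
have vS : Sset e h g' (v e).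
  by exists v; split => //; split => // i iJ; rewrite /g' ffunE iJ.
have lb : forall x, Sset e h g' x -> v e - n%:R * (2 * delta + 2 * h) <= x.
  move=> x [w [bw [<- fl]]].
  have := bad_diam e w v h (ltW h0) bw bv.
  have H : forall i, i \in E -> i != e -> `|w i - v i| <= h.
    move=> i iE ne; have iJ : i \in E :\ e by rewrite !inE ne iE.
    apply: floor_close => //; by rewrite (fl i iJ) /g' ffunE iJ.
  move=> /(_ H); lra.
have hl : has_lbound (Sset e h g') by exists (v e - n%:R * (2 * delta + 2 * h)) => x /lb.
apply/andP; split; first exact: (ge_inf hl vS).
have : v e - n%:R * (2 * delta + 2 * h) <= inf (Sset e h g').
  by apply: lb_le_inf; [exists (v e) | move=> x /lb].
lra.
Qed.
End Det.

Section MeasSets.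
Context d (T : measurableType d).

Lemma measurable_eq (A B : set T) : A = B -> measurable B -> measurable A.
Proof. by move=> ->. Qed.

Lemma meas_ex_seq (I : eqType) (F : I -> set T) (s : seq I) :
  (forall i, i \in s -> measurable (F i)) ->
  measurable [set t | exists i, i \in s /\ F i t].
Proof.
elim: s => [|a s IH] mF.
  rewrite (_ : [set t | _] = set0); first exact: measurable0.
  by apply/seteqP; split => t //= [i []].
rewrite (_ : [set t | _] = F a `|` [set t | exists i, i \in s /\ F i t]).
  apply: measurableU; first by apply: mF; rewrite inE eqxx.
  by apply: IH => i iS; apply: mF; rewrite inE iS orbT.
apply/seteqP; split => t /=.
  move=> [i []]; rewrite inE => /orP[/eqP->|iS] Ft; [by left|by right; exists i].
case=> [Ft|[i [iS Ft]]]; first by exists a; rewrite inE eqxx.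
by exists i; rewrite inE iS orbT.
Qed.

Lemma meas_ex_fin (I : finType) (F : I -> set T) :
  (forall i, measurable (F i)) -> measurable [set t | exists i, F i t].
Proof.
move=> mF; rewrite (_ : [set t | _] = [set t | exists i, i \in enum I /\ F i t]).
  by apply: meas_ex_seq => i _; exact: mF.
apply/seteqP; split => t /= [i H]; exists i; rewrite ?mem_enum //; by case: H.
Qed.

Lemma meas_all_fin (I : finType) (F : I -> set T) :
  (forall i, measurable (F i)) -> measurable [set t | forall i, F i t].
Proof.
move=> mF; rewrite (_ : [set t | _] = ~` [set t | exists i, (~` F i) t]).
  by apply: measurableC; apply: meas_ex_fin => i; apply: measurableC.
apply/seteqP; split => t /=.
  by move=> H [i]; apply; apply: H.
move=> H i; apply: NNPP => nF; apply: H; by exists i.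
Qed.

End MeasSets.

Section Ball.
Variables (R : realType) (n : nat) (E : {set 'I_n * 'I_n}).
Implicit Types (v w a : 'I_n * 'I_n -> R) (C : {set 'I_n * 'I_n}).

Definition lin a w := \sum_(e in E) a e * w e.

Lemma ball_lin a v delta : 0 <= delta ->
  (forall w, Binf E v delta w -> lin a w < 0) <->
  lin a v + delta * \sum_(e in E) `|a e| < 0.
Proof.
move=> d0; split => [H|H w Bw].
  pose w e := v e + delta * Num.sg (a e).
  have Bw : Binf E v delta w.
    move=> e _; rewrite /w opprD addrA subrr sub0r normrN normrM ger0_norm //.
    rewrite normr_sg; case: (a e != 0) => /=; lra.
  have := H w Bw; rewrite /lin /w.
  under eq_bigr do rewrite mulrDr.
  rewrite big_split /= mulr_sumr.
  under [X in _ + X]eq_bigr do rewrite mulrCA.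
  have -> : \sum_(i in E) delta * (a i * Num.sg (a i)) = \sum_(i in E) delta * `|a i|.
    by apply: eq_bigr => i _; rewrite [a i * _]mulrC -normrEsg.
  by [].
apply: le_lt_trans H; rewrite /lin.
have -> : \sum_(e in E) a e * w e =
  \sum_(e in E) a e * v e + \sum_(e in E) a e * (w e - v e).
  by rewrite -big_split /=; apply: eq_bigr => e _; rewrite -mulrDr addrCA subrr addr0.
rewrite lerD2l mulr_sumr; apply: ler_sum => e eE.
apply: le_trans (ler_norm _) _; rewrite normrM mulrC.
apply: ler_wpM2r => //; by rewrite distrC; apply: Bw.
Qed.

Lemma mw_lin w C : C \subset E ->
  mean_weight w C = lin (fun e => (e \in C)%:R / #|C|%:R) w.
Proof.
move=> CE; rewrite /mean_weight /lin big_distrl /=.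
rewrite (big_mkcond (fun e => e \in C)) /= [RHS](big_mkcond (fun e => e \in E)) /=.
apply: eq_bigr => e _.
case: (boolP (e \in C)) => eC.
  by rewrite (fintype.subsetP CE e eC) mul1r mulrC.
by case: (e \in E); rewrite ?mul0r.
Qed.

Lemma mw_lt_lin w C (C' : {set 'I_n * 'I_n}) : C \subset E -> C' \subset E ->
  (mean_weight w C < mean_weight w C') =
  (lin (fun e => (e \in C)%:R / #|C|%:R - (e \in C')%:R / #|C'|%:R) w < 0).
Proof.
move=> CE C'E; rewrite (mw_lin w C CE) (mw_lin w C' C'E) -subr_lt0 /lin -sumrB.
by congr (_ < 0); apply: eq_bigr => e _; rewrite mulrBl.
Qed.
End Ball.
Arguments lin {R n} E a w.
Arguments ball_lin {R n E} a v delta.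
Arguments mw_lin {R n E} w C.
Arguments mw_lt_lin {R n E} w C C'.

Section GoodMeas.
Context (R : realType) d (T : measurableType d) (n : nat) (E : {set 'I_n * 'I_n}).
Variables (r : 'I_n * 'I_n -> T -> R) (delta : R).
Hypothesis d0 : 0 <= delta.
Hypothesis mr : forall e, e \in E -> measurable_fun setT (r e).

Lemma meas_lin_lt a c : measurable [set t | lin E a (fun e => r e t) + c < 0].
Proof.
pose g t := \sum_(e <- index_enum ('I_n * 'I_n)%type)
   (if e \in E then a e * r e t else 0) + c.
have mg : measurable_fun setT g.
  apply: measurable_funD; last exact: measurable_cst.
  apply: measurable_sum => e; case: (boolP (e \in E)) => eE.
    by apply: measurable_funM; [exact: measurable_cst | exact: mr].
  exact: measurable_cst.
have := mg measurableT _ (measurable_itv (`]-oo, 0[%R)).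
rewrite setTI; congr measurable; apply/seteqP; split => t /=;
  by rewrite /g /lin in_itv /= -big_mkcond.
Qed.

Lemma good_meas : measurable
  [set t | exists C, is_dcycle E C /\ Binf E (fun e => r e t) delta `<=` PC E C].
Proof.
apply: meas_ex_fin => C.
case: (classic (is_dcycle E C)) => dC; last first.
  apply: (@measurable_eq _ _ _ set0); last exact: measurable0.
  by apply/seteqP; split => t // [].
pose a (C' : {set 'I_n * 'I_n}) (e : 'I_n * 'I_n) : R :=
  (e \in C)%:R / #|C|%:R - (e \in C')%:R / #|C'|%:R.
pose K (C' : {set 'I_n * 'I_n}) := [set t | is_dcycle E C' -> C' != C ->
  lin E (a C') (fun e => r e t) + delta * \sum_(e in E) `|a C' e| < 0].
apply: (@measurable_eq _ _ _ [set t | forall C', K C' t]); last first.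
  apply: meas_all_fin => C'.
  case: (classic (is_dcycle E C' /\ C' != C)) => [[dC' ne]|nd].
    rewrite (_ : K C' = [set t | lin E (a C') (fun e => r e t) +
         delta * \sum_(e in E) `|a C' e| < 0]); first exact: meas_lin_lt.
    by apply/seteqP; split => t /=; [apply | move=> H _ _].
  rewrite (_ : K C' = setT); first exact: measurableT.
  apply/seteqP; split => t //= _ dC' ne; by exfalso; apply: nd.
apply/seteqP; split => t /=.
  move=> [_ sub] C' dC' ne; apply: (ball_lin (a C') (fun e => r e t) delta d0).1 => w Bw.
  have [_ H] := sub w Bw.
  by rewrite /a -mw_lt_lin ?(dcycle_sub dC) ?(dcycle_sub dC') //; exact: (H C' dC' ne).
move=> H; split => // w Bw; split => // C' dC' ne.
have := (ball_lin (a C') (fun e => r e t) delta d0).2 (H C' dC' ne) w Bw.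
by rewrite /a -mw_lt_lin ?(dcycle_sub dC) ?(dcycle_sub dC').
Qed.
End GoodMeas.

Section Edge.
Context (R : realType) d (T : measurableType d) (P : probability T R).
Variables (I : finType) (E : {set I}) (X : I -> T -> R) (e : I).
Variables (h L c : R) (lo : {ffun I -> int} -> R).
Hypothesis indep : mutually_independent P E X.
Hypothesis eE : e \in E.
Hypothesis mX : forall i, i \in E -> measurable_fun setT (X i).
Hypothesis h0 : 0 < h.
Hypothesis c0 : 0 <= c.
Hypothesis bnd : forall a, (P (X e @^-1` `[a, (a + L)%R]%classic) <= c%:E)%E.

Definition Af (g : {ffun I -> int}) i : set R := [set x | Num.floor (x / h) = g i].
Definition canon (g : {ffun I -> int}) := forall i, i \notin E :\ e -> g i = 0.
Definition Bf g i : set R := if i == e then `[lo g, lo g + L]%classic else Af g i.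
Definition cube g := [set t | canon g /\ forall i, i \in E :\ e -> Af g i (X i t)].
Definition rect g := [set t | canon g /\ forall i, i \in E -> Bf g i (X i t)].
Definition cubek k := if @pickle_inv {ffun I -> int} k is Some g then cube g else set0.
Definition rectk k := if @pickle_inv {ffun I -> int} k is Some g then rect g else set0.

Lemma Af_meas g i : measurable (Af g i).
Proof.
have mf : measurable_fun setT (fun x : R => x / h).
  by apply: measurable_funM; [exact: measurable_id | exact: measurable_cst].
have := mf measurableT _ (measurable_itv (`[(g i)%:~R, (g i + 1)%:~R[%R)).
rewrite setTI; congr measurable; apply/seteqP; split => x /=;
  rewrite in_itv /= /Af -floor_eq.
- by move/eqP.
- by move=> /= ->.
Qed.

Lemma Bf_meas g i : measurable (Bf g i).
Proof. by rewrite /Bf; case: ifP => _; [exact: measurable_itv | exact: Af_meas]. Qed.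

Lemma forall_meas (J : {set I}) (B : I -> set R) :
  (forall i, measurable (B i)) -> J \subset E ->
  measurable [set t | forall i, i \in J -> B i (X i t)].
Proof.
move=> mB JE; apply: meas_all_fin => i.
case: (boolP (i \in J)) => iJ.
  have := mX i (fintype.subsetP JE i iJ) measurableT _ (mB i).
  rewrite setTI; congr measurable; apply/seteqP; split => t /=; first by [].
  by apply.
apply: (@measurable_eq _ _ _ setT); last exact: measurableT.
by apply/seteqP; split => t //= _; rewrite (negbTE iJ).
Qed.

Lemma cube_meas g : measurable (cube g).
Proof.
case: (classic (canon g)) => cg.
  apply: (@measurable_eq _ _ _ [set t | forall i, i \in E :\ e -> Af g i (X i t)]).
    by apply/seteqP; split => t /=; [case | split].
  by apply: forall_meas; [exact: Af_meas | exact: subsetDl].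
apply: (@measurable_eq _ _ _ set0); last exact: measurable0.
by apply/seteqP; split => t //= [].
Qed.

Lemma rect_meas g : measurable (rect g).
Proof.
case: (classic (canon g)) => cg.
  apply: (@measurable_eq _ _ _ [set t | forall i, i \in E -> Bf g i (X i t)]).
    by apply/seteqP; split => t /=; [case | split].
  by apply: forall_meas; [exact: Bf_meas | exact: subxx].
apply: (@measurable_eq _ _ _ set0); last exact: measurable0.
by apply/seteqP; split => t //= [].
Qed.

Lemma cubek_meas k : measurable (cubek k).
Proof. rewrite /cubek; case: pickle_inv => [g|]; [exact: cube_meas | exact: measurable0]. Qed.

Lemma rectk_meas k : measurable (rectk k).
Proof. rewrite /rectk; case: pickle_inv => [g|]; [exact: rect_meas | exact: measurable0]. Qed.

Lemma rect_prob g :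
  P (rect g) = (P (X e @^-1` `[lo g, (lo g + L)%R]%classic) * P (cube g))%E.
Proof.
case: (classic (canon g)) => cg; last first.
  have -> : rect g = set0 by apply/seteqP; split => t //= [].
  have -> : cube g = set0 by apply/seteqP; split => t //= [].
  by rewrite measure0 mule0.
have -> : rect g = [set t | forall i, i \in E -> Bf g i (X i t)].
  by apply/seteqP; split => t /=; [case | split].
have -> : cube g = [set t | forall i, i \in E :\ e -> Af g i (X i t)].
  by apply/seteqP; split => t /=; [case | split].
rewrite (indep _ _ (subxx E) (Bf_meas g)) (indep _ _ (subsetDl E [set e]) (Af_meas g)).
rewrite (bigD1 e) //=; congr (_ * _)%E; first by rewrite /Bf eqxx.
apply: eq_big => i; first by rewrite !inE andbC.
by move=> /andP[_ ne]; rewrite /Bf (negbTE ne).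
Qed.


Lemma cube_disj : trivIset setT cubek.
Proof.
move=> k1 k2 _ _ [t []]; rewrite /cubek.
case e1: (pickle_inv k1) => [g1|] //; case e2: (pickle_inv k2) => [g2|] //.
move=> [c1 H1] [c2 H2].
have g12 : g1 = g2.
  apply/ffunP => i; case: (boolP (i \in E :\ e)) => iJ.
    by rewrite -(H1 i iJ) -(H2 i iJ).
  by rewrite (c1 i iJ) (c2 i iJ).
have := @pickle_invK {ffun I -> int} k1; have := @pickle_invK {ffun I -> int} k2.
by rewrite e1 e2 /= g12 => -> ->.
Qed.

Lemma sum_cube : (\sum_(k <oo) P (cubek k) <= 1)%E.
Proof.
rewrite -measure_semi_bigcup //; first exact: probability_le1 (bigcupT_measurable _ cubek_meas).
  exact: cubek_meas.
exact: cube_disj.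
exact: bigcupT_measurable cubek_meas.
Qed.

Lemma sum_rect : (P (\bigcup_k rectk k) <= c%:E)%E.
Proof.
apply: (@le_trans _ _ (\sum_(k <oo) P (rectk k))%E).
  apply: measure_sigma_subadditive => //; first exact: rectk_meas.
  exact: bigcupT_measurable rectk_meas.
apply: (@le_trans _ _ (\sum_(k <oo) (c%:E * P (cubek k)))%E).
  apply: lee_nneseries => k _; first by move=> _; exact: measure_ge0.
  rewrite /rectk /cubek; case: pickle_inv => [g|]; last by rewrite !measure0 mule0.
  by rewrite rect_prob; apply: lee_wpmul2r => //; exact: bnd.
rewrite nneseriesZl; last by move=> k _; exact: measure_ge0.
rewrite -[X in (_ <= X)%E]mule1; apply: lee_wpmul2l; first by rewrite lee_fin.
exact: sum_cube.
Qed.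

Definition gvec t : {ffun I -> int} :=
  [ffun i => if i \in E :\ e then Num.floor (X i t / h) else 0].

Lemma cover t : lo (gvec t) <= X e t <= lo (gvec t) + L ->
  (\bigcup_k rectk k) t.
Proof.
move=> H; exists (pickle (gvec t)) => //; rewrite /rectk pickleK_inv; split.
  by move=> i iJ; rewrite ffunE (negbTE iJ).
move=> i iE; rewrite /Bf; case: eqP => [->|ne].
  by rewrite /= in_itv /=.
rewrite /Af /= ffunE; have -> : i \in E :\ e by rewrite !inE iE andbT; apply/eqP.
by [].
Qed.

End Edge.

Lemma dens_bound (R : realType) d (T : measurableType d) (P : probability T R)
  (X : T -> R) (f : R -> R) (phi a L : R) :
  has_density P X f -> (forall y, f y <= phi) -> 0 <= L ->
  (P (X @^-1` `[a, (a + L)%R]%classic) <= (phi * L)%:E)%E.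
Proof.
move=> [mX [mf [f0 hd]]] fphi L0.
rewrite hd; last exact: measurable_itv.
apply: (@le_trans _ _ (\int[@lebesgue_measure R]_(y in `[a, (a + L)%R]%classic) (cst phi%:E) y)%E).
  apply: (ge0_le_integral (@lebesgue_measure R)).
  - exact: measurable_itv.
  - by move=> y _; rewrite lee_fin.
  - apply/measurable_EFinP; apply: measurable_funS mf => //; exact: measurable_itv.
  - exact: measurable_cst.
  - by move=> y _; rewrite lee_fin.
rewrite integral_cst; last exact: measurable_itv.
set m := (X in (_ * X)%E).
have -> : m = (if (a%:E < (a + L)%:E)%E then ((a + L)%:E - a%:E)%E else 0%E).
  rewrite /m; exact: lebesgue_measure_itv.
case: ifP => _; last first.
  rewrite mule0 lee_fin; apply: mulr_ge0 => //.
  by apply: le_trans (fphi a); exact: f0.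
by rewrite -EFinB -EFinM lee_fin addrC addKr.
Qed.


Lemma union_seq_bound (R : realType) d (T : measurableType d) (P : probability T R)
  (I : eqType) (F : I -> set T) (c : R) (s : seq I) :
  (forall i, i \in s -> measurable (F i) /\ (P (F i) <= c%:E)%E) ->
  (P [set t | exists i, i \in s /\ F i t] <= ((size s)%:R * c)%:E)%E.
Proof.
elim: s => [|a s IH] H.
  rewrite (_ : [set t | _] = set0); first by rewrite measure0 mul0r.
  by apply/seteqP; split => t //= [i []].
rewrite (_ : [set t | _] = F a `|` [set t | exists i, i \in s /\ F i t]); last first.
  apply/seteqP; split => t /=.
    move=> [i []]; rewrite inE => /orP[/eqP->|iS] Ft; [by left|by right; exists i].
  case=> [Ft|[i [iS Ft]]]; first by exists a; rewrite inE eqxx.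
  by exists i; rewrite inE iS orbT.
have [ma Pa] := H a (mem_head _ _).
have H' : forall i, i \in s -> measurable (F i) /\ (P (F i) <= c%:E)%E.
  by move=> i iS; apply: H; rewrite inE iS orbT.
apply: le_trans (measureU2 _ ma _) _.
  by apply: meas_ex_seq => i iS; case: (H' i iS).
apply: le_trans (leeD Pa (IH H')) _.
by rewrite -EFinD lee_fin /= -add1n natrD mulrDl mul1r.
Qed.

Theorem mainTheorem6 (R : realType) (d : measure_display) (T : measurableType d)
  (P : probability T R) (n : nat) (E : {set 'I_n * 'I_n})
  (r : 'I_n * 'I_n -> T -> R) (f : 'I_n * 'I_n -> R -> R) (phi : R) :
  (0 < n)%N ->
  out_nonempty E ->
  strongly_connected E ->
  mutually_independent P E r ->
  (forall e, e \in E -> has_density P (r e) (f e)) ->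
  0 < phi ->
  (forall e y, e \in E -> f e y <= phi) ->
  let delta := 1 / ((3 * n ^ 2 * #|E|)%:R * phi) in
  ((1 - 1 / n%:R)%:E <=
   P [set t | exists C, is_dcycle E C /\
                Binf E (fun e => r e t) delta `<=` PC E C])%E.
Proof.
move=> n0 hout hsc indep hdens phi0 fphi.
pose delta := 1 / ((3 * n ^ 2 * #|E|)%:R * phi).
change (((1 - 1 / n%:R)%:E <= P [set t | exists C, is_dcycle E C /\
                Binf E (fun e => r e t) delta `<=` PC E C])%E).
have m0 : (0 < #|E|)%N.
  have [j hj] := hout (Ordinal n0); apply/card_gt0P; by exists (Ordinal n0, j).
have del0 : 0 < delta.
  rewrite /delta; apply: divr_gt0 => //; apply: mulr_gt0 => //.
  by rewrite ltr0n !muln_gt0 m0 andbT /= n0.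
pose h := delta / 2.
have h0 : 0 < h by rewrite /h divr_gt0.
pose L := n%:R * (2 * delta + 2 * h).
have L0 : 0 <= L by rewrite /L; apply: mulr_ge0 => //; lra.
pose c := phi * L.
have c0 : 0 <= c by rewrite /c; apply: mulr_ge0 => //; exact: ltW.
have mr : forall e, e \in E -> measurable_fun setT (r e).
  by move=> e eE; case: (hdens e eE).
have exC := dcycle_exists n E n0 hout hsc.
set G := [set t | exists C, _].
have mG : measurable G by apply: good_meas => //; exact: ltW.
pose lo e (g : {ffun 'I_n * 'I_n -> int}) := inf (Sset R n E delta e h g).
pose U e := \bigcup_k rectk R d T _ E r e h L (lo e) k.
have UP : forall e, e \in enum E -> measurable (U e) /\ (P (U e) <= c%:E)%E.
  move=> e; rewrite mem_enum => eE; split.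
    by apply: bigcupT_measurable => k; apply: rectk_meas.
  apply: sum_rect => //.
  move=> a; apply: dens_bound; [exact: hdens | | exact: L0].
  by move=> y; apply: fphi.
have sub : ~` G `<=` [set t | exists e, e \in enum E /\ U e t].
  move=> t nG.
  have [e [eE be]] := notgood_bad R n E delta (fun e => r e t) exC nG.
  exists e; split; first by rewrite mem_enum.
  apply: cover.
  exact: (S_bounds R n E delta e (fun e => r e t) h _ h0 be erefl).
have PnG : (P (~` G) <= ((size (enum E))%:R * c)%:E)%E.
  apply: (le_trans _ (@union_seq_bound R d T P _ U c (enum E) UP)).
  apply: le_measure => //; rewrite inE.
    exact: measurableC.
  by apply: meas_ex_seq => i iS; case: (UP i iS).
have arith : (size (enum E))%:R * c = 1 / n%:R.
  rewrite -cardE /c /L /h /delta !natrM.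
  have nn0 : n%:R != 0 :> R by rewrite pnatr_eq0 -lt0n.
  have mn0 : #|E|%:R != 0 :> R by rewrite pnatr_eq0 -lt0n.
  field; apply/and3P; split => //; exact: lt0r_neq0.
rewrite arith in PnG.
rewrite probability_setC // in PnG.
have P1 := probability_le1 P mG.
have P0 := measure_ge0 P G.
move: PnG P1 P0; case: (P G) => [x| |] //=.
rewrite -EFinB !lee_fin => H1 H2 H3; lra.
Qed.
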